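(* Let $\mathcal{C}$ be a finite set with $|\mathcal{C}|\ge2$ and let $\alpha=(\alpha_j)_{j\in\mathcal{C}}$ with $\alpha_j\in(0,1)$ rational and $\sum_j\alpha_j=1$. Then there exists an unbiased within-quota random roster for $\alpha$, i.e. a random map $\sigma:\{1,2,\dots\}\to\mathcal{C}$ such that, writing $N_j(l)=|\{k\le l:\sigma(k)=j\}|$, almost surely $\lfloor l\alpha_j\rfloor\le N_j(l)\le\lceil l\alpha_j\rceil$ for all $l\ge1$ and $j\in\mathcal{C}$, and $\mathbb{E}[N_j(l)]=l\alpha_j$ for all $l\ge1$ and $j\in\mathcal{C}$.
   Context: A roster is a map $\sigma:\{1,2,\dots\}\to\mathcal{C}$, interpreted as assigning the $k$-th position to category $\sigma(k)$. *)

(* Defs.v *)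
From HB Require Import structures.
From mathcomp Require Import all_boot all_order all_algebra.
From mathcomp Require Import all_classical all_reals all_analysis.
Set Implicit Arguments. Unset Strict Implicit. Unset Printing Implicit Defensive.
Import Order.TTheory GRing.Theory Num.Theory.
Local Open Scope ring_scope.
Local Open Scope classical_set_scope.

(* A roster is a map from positions {1,2,...} to categories C; it is
   represented as a function nat -> C whose value at 0 is ignored. *)

Definition count_upto (C : finType) (sigma : nat -> C) (j : C) (l : nat) : nat :=
  (\sum_(1 <= k < l.+1) (sigma k == j))%N.

Definition within_quota (C : finType) (alpha : C -> rat) (sigma : nat -> C) : Prop :=
  forall l j, (1 <= l)%N ->
    (Num.floor (l%:R * alpha j) <= (count_upto sigma j l)%:Z)
    /\ ((count_upto sigma j l)%:Z <= Num.ceil (l%:R * alpha j)).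

Definition random_roster (d : measure_display) (T : measurableType d)
  (C : finType) (sigma : T -> nat -> C) : Prop :=
  forall k j, measurable [set w | sigma w k = j].

Definition unbiased_within_quota_random_roster (R : realType)
  (d : measure_display) (T : measurableType d) (P : probability T R)
  (C : finType) (alpha : C -> rat) (sigma : T -> nat -> C) : Prop :=
  [/\ random_roster sigma,
      {ae P, forall w, within_quota alpha (sigma w)} &
      forall l j, (1 <= l)%N ->
        (\int[P]_w ((count_upto (sigma w) j l)%:R : R)%:E
         = (l%:R * ratr (alpha j) : R)%:E)%E].

(* Main.v *)
Require Import Defs.
From HB Require Import structures.
From mathcomp Require Import all_boot all_order all_algebra.
From mathcomp Require Import zify.
Import Order.TTheory GRing.Theory Num.Theory.

Set Implicit Arguments. Unset Strict Implicit.

Definition nbh (X Y : finType) (R : X -> Y -> bool) (B : {set Y}) (S : {set X}) : {set Y} :=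
  [set y in B | [exists x in S, R x y]].

Lemma nbh_sub (X Y : finType) (R : X -> Y -> bool) (B : {set Y}) (S T : {set X}) :
  S \subset T -> nbh R B S \subset nbh R B T.
Proof.
move=> sST; apply/subsetP=> y; rewrite !inE => /andP[-> /existsP[x /andP[xS Rxy]]].
by apply/existsP; exists x; rewrite (subsetP sST).
Qed.

Lemma hall_gen (X Y : finType) (R : X -> Y -> bool) (y0 : Y) :
  forall n (A : {set X}) (B : {set Y}), #|A| <= n ->
  (forall S : {set X}, S \subset A -> #|S| <= #|nbh R B S|) ->
  exists f : X -> Y, {in A &, injective f} /\
     forall x, x \in A -> (f x \in B) && R x (f x).
Proof.
elim=> [|n IH] A B hA hH.
  exists (fun _ => y0); have A0 : A = set0 by apply/eqP; rewrite -cards_eq0 -leqn0.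
  by rewrite A0; split=> [x|x]; rewrite inE.
have [A0|/set0Pn[x0 x0A]] := eqVneq A set0.
  by exists (fun _ => y0); rewrite A0; split=> [x|x]; rewrite inE.
case: (boolP [exists S : {set X},
   [&& S \subset A, S != set0, S != A & #|S| == #|nbh R B S|]]).
- case/existsP=> S /and4P[sSA nS0 nSA /eqP eqS].
  have hS : #|S| <= n.
    have := @proper_card _ S A; rewrite properEneq nSA sSA => /(_ isT); lia.
  have [f1 [inj1 h1]] : exists f : X -> Y, {in S &, injective f} /\
     forall x, x \in S -> (f x \in nbh R B S) && R x (f x).
    apply: IH hS _ => T sTS.
    have -> : nbh R (nbh R B S) T = nbh R B T.
      apply/setP=> y; rewrite !inE; apply/idP/idP.
        by case/andP=> /andP[-> _] ->.
      case/andP=> yB /existsP[x /andP[xT Rxy]]; rewrite yB /=.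
      by apply/andP; split; apply/existsP; exists x; rewrite Rxy ?(subsetP sTS) ?xT.
    exact/hH/(subset_trans sTS).
  have hAS : #|A :\: S| <= n.
    rewrite cardsDS //; move: nS0; rewrite -card_gt0; lia.
  have [f2 [inj2 h2]] : exists f : X -> Y, {in A :\: S &, injective f} /\
     forall x, x \in A :\: S -> (f x \in B :\: nbh R B S) && R x (f x).
    apply: IH hAS _ => T sTAS.
    have dTS : [disjoint T & S].
      by rewrite -setI_eq0; apply/eqP/setP=> x; rewrite !inE;
         apply/negP=> /andP[/(subsetP sTAS)]; rewrite !inE => /andP[/negP ? _].
    have sTSA : T :|: S \subset A.
      by rewrite subUset sSA andbT; apply: subset_trans sTAS (subsetDl _ _).
    have h1' := hH _ sTSA.
    have sub : nbh R B (T :|: S) \subset nbh R (B :\: nbh R B S) T :|: nbh R B S.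
      apply/subsetP=> y; rewrite [y \in nbh _ _ _]inE => /andP[yB /existsP[x /andP[]]].
      rewrite inE => /orP[xT|xS] Rxy; rewrite in_setU.
        case yN: (y \in nbh R B S); first by rewrite orbT.
        rewrite orbF inE in_setD yN yB /=.
        by apply/existsP; exists x; rewrite xT.
      apply/orP; right; rewrite inE yB /=.
      by apply/existsP; exists x; rewrite xS.
    have := subset_leq_card sub; rewrite cardsU.
    move: h1'; rewrite cardsU (disjoint_setI0 dTS) cards0 subn0 -eqS.
    have := leq_addr #|nbh R (B :\: nbh R B S) T :&: nbh R B S| 0; lia.
  exists (fun x => if x \in S then f1 x else f2 x); split.
    move=> x y xA yA /=.
    case xS: (x \in S); case yS: (y \in S).
    + exact: inj1.
    + move=> E; have /andP[h1a _] := h1 x xS.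
      have /andP[h2a _] := h2 y ltac:(by rewrite inE yS yA).
      by move: h2a; rewrite in_setD -E h1a.
    + move=> E; have /andP[h1a _] := h1 y yS.
      have /andP[h2a _] := h2 x ltac:(by rewrite inE xS xA).
      by move: h2a; rewrite in_setD E h1a.
    + by apply: inj2; rewrite inE ?xS ?yS.
  move=> x xA; case xS: (x \in S).
    have /andP[h1a ->] := h1 x xS; by move: h1a; rewrite inE => /andP[-> _].
  have /andP[h2a ->] := h2 x ltac:(by rewrite inE xS xA).
  by move: h2a; rewrite in_setD => /andP[_ ->].
- move=> hnt.
  have strict : forall S : {set X}, S \subset A -> S != set0 -> S != A -> #|S| < #|nbh R B S|.
    move=> S sSA nS0 nSA; rewrite ltn_neqAle hH // andbT.
    by apply: contra hnt => eqS; apply/existsP; exists S; rewrite sSA nS0 nSA.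
  have : 0 < #|nbh R B [set x0]| by apply: leq_trans (hH _ _); rewrite ?cards1 ?sub1set.
  rewrite card_gt0 => /set0Pn[y1]; rewrite inE => /andP[y1B /existsP[x1]].
  rewrite inE => /andP[/eqP -> Rx0y1].
  have hA' : #|A :\ x0| <= n by move: hA; rewrite (cardsD1 x0 A) x0A; lia.
  have [f [injf hf]] : exists f : X -> Y, {in A :\ x0 &, injective f} /\
     forall x, x \in A :\ x0 -> (f x \in B :\ y1) && R x (f x).
    apply: IH hA' _ => T sT.
    have [->|nT0] := eqVneq T set0; first by rewrite cards0.
    have sTA : T \subset A by apply: subset_trans sT (subsetDl _ _).
    have nTA : T != A.
      by apply/eqP=> TA; move: sT; rewrite TA => /subsetP/(_ x0 x0A); rewrite !inE eqxx.
    have := strict T sTA nT0 nTA.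
    have sub : nbh R B T \subset y1 |: nbh R (B :\ y1) T.
      apply/subsetP=> y; rewrite !inE => /andP[-> ->].
      by case: (y == y1).
    have := subset_leq_card sub; rewrite cardsU1; lia.
  exists (fun x => if x == x0 then y1 else f x); split.
    move=> x y xA yA /=.
    case: (eqVneq x x0) => [->|nx]; case: (eqVneq y x0) => [->|ny] //.
    + move=> E; have := hf y ltac:(by rewrite !inE ny yA); rewrite -E !inE eqxx.
      by case/andP=> /andP[].
    + move=> E; have := hf x ltac:(by rewrite !inE nx xA); rewrite E !inE eqxx.
      by case/andP=> /andP[].
    + by apply: injf; rewrite !inE ?nx ?ny.
  move=> x xA; case: (eqVneq x x0) => [->|nx]; first by rewrite y1B.
  by have /andP[] := hf x ltac:(by rewrite !inE nx xA); rewrite !inE => /andP[_ ->] ->.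
Qed.

Lemma konig (X Y : finType) (y0 : Y) : forall d (A : X -> Y -> nat),
  (forall x, \sum_y A x y = d) -> (forall y, \sum_x A x y = d) ->
  exists gs : seq (X -> Y), [/\ size gs = d, (forall g, List.In g gs -> injective g) &
     forall x y, \sum_(g <- gs) (g x == y) = A x y].
Proof.
elim=> [|d IH] A hr hc.
  exists [::]; split=> // x y; rewrite big_nil.
  by have := hr x; move/eqP; rewrite sum_nat_eq0 => /forallP/(_ y)/implyP/(_ isT)/eqP.
pose R x y := 0 < A x y.
have hall : forall S : {set X}, S \subset setT -> #|S| <= #|nbh R setT S|.
  move=> S _.
  rewrite -(leq_pmul2r (ltn0Sn d)) -!sum_nat_const.
  have e1 : \sum_(x in S) d.+1 = \sum_(x in S) \sum_(y in nbh R setT S) A x y.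
    apply: eq_bigr => x xS; rewrite -(hr x) [in RHS]big_mkcond /=; apply: eq_bigr => y _.
    case: ifP => // yN; move: yN; rewrite !inE /=.
    case: (posnP (A x y)) => // Ap /existsP []; exists x; rewrite xS; exact Ap.
  rewrite e1 exchange_big /=; apply: leq_sum => y _; rewrite -(hc y).
  by rewrite [X in _ <= X](bigID (fun x => x \in S)) /= leq_addr.
have [f [injf hf]] := hall_gen y0 (leqnn #|[set: X]|) hall.
have finj : injective f by move=> x1 x2; apply: injf; rewrite inE.
have Apos : forall x, 0 < A x (f x) by move=> x; have /andP[_ H] := hf x (in_setT x).
have card : #|X| = #|Y|.
  apply/eqP; rewrite -(eqn_pmul2r (ltn0Sn d)) -!sum_nat_const.
  rewrite (eq_bigr _ (fun x _ => esym (hr x))) (eq_bigr (fun y => \sum_x A x y) (fun y _ => esym (hc y))).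
  by rewrite exchange_big.
have colf : forall y, \sum_x (f x == y) = 1.
  move=> y; have /codomP[x1 ->] := inj_card_onto finj (eq_leq (esym card)) y.
  rewrite (bigD1 x1) //= eqxx big1 // => x nx; apply/eqP; rewrite eqb0; apply: contra nx => /eqP.
  by move/finj ->.
pose A' x y := A x y - (f x == y).
have eA : forall x y, A x y = A' x y + (f x == y).
  move=> x y; rewrite /A'; case: eqP => [<-|_]; last by rewrite subn0 addn0.
  by have := Apos x; lia.
have [gs [hs hinj hsum]] : exists gs : seq (X -> Y), [/\ size gs = d,
    (forall g, List.In g gs -> injective g) &
     forall x y, \sum_(g <- gs) (g x == y) = A' x y].
  apply: IH => [x|y].
    apply/eqP; rewrite -(eqn_add2r 1) [d + 1]addn1 -(hr x).
    have e1 : \sum_y ((f x == y) : nat) = 1.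
      by rewrite (bigD1 (f x)) //= eqxx big1 // => y ny; apply/eqP; rewrite eqb0 eq_sym.
    by rewrite (eq_bigr _ (fun y _ => eA x y)) big_split /= e1.
  apply/eqP; rewrite -(eqn_add2r 1) [d + 1]addn1 -(hc y).
  by rewrite (eq_bigr _ (fun x _ => eA x y)) big_split /= colf.
exists (f :: gs); split => /=; first by rewrite hs.
  by move=> g [<-|/hinj].
by move=> x y; rewrite big_cons hsum eA addnC.
Qed.

Lemma sum_range n a b : a <= b -> \sum_(p < n) (a <= p < b) = minn b n - minn a n.
Proof.
move=> ab; elim: n => [|n IH]; first by rewrite big_ord0; lia.
rewrite big_ord_recr /= IH.
case: (leqP a n) => an; case: (ltnP n b) => nb /=; lia.
Qed.

Lemma div_eqE q u k : 0 < q -> (u %/ q == k) = (k * q <= u < k.+1 * q).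
Proof. by move=> q0; rewrite eqn_leq leq_divRL // -ltnS ltn_divLR // andbC. Qed.

Lemma sum_div q n k : 0 < q -> \sum_(u < n) (u %/ q == k) = minn (k.+1 * q) n - minn (k * q) n.
Proof.
move=> q0; rewrite -sum_range; last by rewrite leq_mul2r leqnSn orbT.
by apply: eq_bigr => u _; rewrite div_eqE.
Qed.

Lemma sum_ordeq q x : \sum_(p < q) (x == p :> nat) = (x < q).
Proof.
have -> : \sum_(p < q) (x == p :> nat) = \sum_(p < q) (x <= p < x.+1).
  by apply: eq_bigr => p _; rewrite eqn_leq ltnS andbC.
rewrite sum_range //; case: ltnP => /=; lia.
Qed.

Definition cnt (q : nat) (C : finType) (r : 'I_q -> C) (j : C) (l : nat) : nat :=
  \sum_(p < q | p < l) (r p == j).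

Lemma big_In (T : Type) (s : seq T) (F G : T -> nat) :
  (forall x, List.In x s -> F x = G x) -> \sum_(x <- s) F x = \sum_(x <- s) G x.
Proof.
elim: s => [|x s IH] H; first by rewrite !big_nil.
by rewrite !big_cons H /=; [rewrite IH // => y Hy; apply: H; right | left].
Qed.

Lemma core (C : finType) (m : C -> nat) (q : nat) (c0 : C) :
  q = \sum_j m j -> 0 < q ->
  exists rs : seq ('I_q -> C), [/\ size rs = q,
   (forall r, List.In r rs -> forall j l, l <= q ->
       cnt r j l * q < l * m j + q /\ l * m j < cnt r j l * q + q) &
   (forall j l, l <= q -> \sum_(r <- rs) cnt r j l = l * m j)].
Proof.
move=> hq q0.
have mle : forall j, m j <= q by move=> j; rewrite hq (bigD1 j) //= leq_addr.
pose y0 : 'I_q := Ordinal q0.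
pose B (j : C) (k : nat) (p : nat) :=
  \sum_(u < q * m j) (((u %/ q == k) && (u %/ m j == p)) : nat).
have rowB : forall j k, k < m j -> \sum_(p < q) B j k p = q.
  move=> j k km; rewrite /B exchange_big /=.
  have m0 : 0 < m j by lia.
  rewrite (eq_bigr (fun u : 'I_(q * m j) => (u %/ q == k) : nat)).
    have h1 : k.+1 * q <= q * m j by rewrite mulnC leq_mul2l km orbT.
    have h2 : k * q <= q * m j by apply: leq_trans h1; rewrite leq_mul2r leqnSn orbT.
    by rewrite sum_div // (minn_idPl h1) (minn_idPl h2) mulSn addnK.
  move=> u _; rewrite (eq_bigr (fun p : 'I_q => (u %/ q == k) * (u %/ m j == p))); last first.
    by move=> p _; rewrite mulnb.
  rewrite -big_distrr /= sum_ordeq.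
  have -> : u %/ m j < q by rewrite ltn_divLR // mulnC.
  by rewrite muln1.
have colB : forall j p, p < q -> \sum_(k < q | k < m j) B j k p = m j.
  move=> j p pq; rewrite /B.
  case: (posnP (m j)) => [m0|m0].
    by rewrite m0 big1 // => k _; rewrite muln0 big_ord0.
  rewrite exchange_big /=.
  rewrite (eq_bigr (fun u : 'I_(q * m j) => (u %/ m j == p) : nat)).
    have h1 : p.+1 * m j <= q * m j by rewrite leq_mul2r pq orbT.
    have h2 : p * m j <= q * m j by apply: leq_trans h1; rewrite leq_mul2r leqnSn orbT.
    by rewrite sum_div // (minn_idPl h1) (minn_idPl h2) mulSn addnK.
  move=> u _.
  rewrite (eq_bigr (fun k : 'I_q => (u %/ m j == p) * (u %/ q == k))); last first.
    by move=> k _; rewrite mulnb andbC.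
  rewrite -big_distrr /= big_mkcond /=.
  rewrite (eq_bigr (fun k : 'I_q => (u %/ q == k) : nat)); last first.
    move=> k _; case: ifP => // /negbT; rewrite -leqNgt => mk.
    case: eqP => // ek; have hu : (u : nat) < m j * q by rewrite [m j * q]mulnC; exact: ltn_ord. move: hu; rewrite -ltn_divLR //; lia.
  rewrite sum_ordeq.
  have -> : u %/ q < q by rewrite ltn_divLR //; have hu : (u : nat) < q * m j by []; have := mle j; nia.
  by rewrite muln1.
pose Tok := {x : C * 'I_q | x.2 < m x.1}.
have tok_sum : forall F : C -> nat -> nat,
    \sum_(t : Tok) F (val t).1 (val t).2 = \sum_j \sum_(k < q | k < m j) F j k.
  move=> F.
  rewrite -(big_sub (fun x : C * 'I_q => x.2 < m x.1) (fun x => F x.1 x.2)).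
  by rewrite pair_big_dep /=.
pose A (t : Tok) (p : 'I_q) := B (val t).1 (val t).2 p.
have rowA : forall t, \sum_p A t p = q by move=> t; apply: rowB; exact: (valP t).
have colA : forall p, \sum_t A t p = q.
  move=> p; rewrite /A (tok_sum (fun j k => B j k p)) [in RHS]hq.
  by apply: eq_bigr => j _; apply: colB.
have [gs [hs hinj hsum]] := konig y0 rowA colA.
have cardT : #|{: Tok}| = q.
  have e1 : \sum_(t : Tok) \sum_p A t p = #|{:Tok}| * q.
    by rewrite (eq_bigr _ (fun t _ => rowA t)) sum_nat_const.
  have e2 : \sum_(t : Tok) \sum_p A t p = q * q.
    by rewrite exchange_big (eq_bigr _ (fun p _ => colA p)) sum_nat_const card_ord.
  by apply/eqP; rewrite -(eqn_pmul2r q0) -e1 e2.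
pose rg (g : Tok -> 'I_q) (p : 'I_q) : C :=
  odflt c0 (omap (fun t : Tok => (val t).1) [pick t | g t == p]).
have ltE : forall (x l : nat), x < q -> (x < l) = \sum_(p < q | p < l) (x == p) :> nat.
  move=> x l xq; case: (ltnP x l) => h.
    rewrite (bigD1 (Ordinal xq)) /= ?h // eqxx big1 // => p /andP[_ np].
    apply/eqP; rewrite eqb0; apply: contra np => /eqP e.
    by apply/eqP/val_inj; rewrite /= e.
  rewrite big1 // => p pl; apply/eqP; rewrite eqb0; apply/eqP => e.
  by move: h; rewrite e leqNgt pl.
have rgE : forall g, injective g -> forall p j,
    (rg g p == j : nat) = \sum_t ((g t == p) && ((val t).1 == j)).
  move=> g ig p j.
  have cle : #|'I_q| <= #|{:Tok}| by rewrite card_ord cardT.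
  have /codomP[t0 ->] := inj_card_onto ig cle p.
  rewrite (bigD1 t0) //= eqxx big1 ?addn0; last first.
    by move=> t nt; rewrite (inj_eq ig) (negbTE nt).
  rewrite /rg; case: pickP => [t /eqP /ig -> | /(_ t0)] //.
  by rewrite eqxx.
have cntE : forall g, injective g -> forall j l,
    cnt (rg g) j l = \sum_t (((val t).1 == j) && (g t < l)).
  move=> g ig j l; rewrite /cnt.
  rewrite (eq_bigr _ (fun p _ => rgE g ig p j)) exchange_big /=.
  apply: eq_bigr => t _.
  rewrite (eq_bigr (fun p : 'I_q => ((val t).1 == j) * (g t == p :> nat))); last first.
    by move=> p _; rewrite mulnb andbC.
  by rewrite -big_distrr /= -ltE // mulnb.
have posA : forall g, List.In g gs -> forall t, 0 < A t (g t).
  move=> g Hg t; rewrite -hsum; have [l1 [l2 E]] := List.in_split _ _ Hg; rewrite E.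
  by rewrite big_cat big_cons eqxx /= add1n addnS ltnS leq0n.
have exu : forall j k p, 0 < B j k p ->
    exists u, [/\ u < q * m j, u %/ q = k & u %/ m j = p].
  move=> j k p; rewrite /B.
  case: (boolP [exists u : 'I_(q * m j), (u %/ q == k) && (u %/ m j == p)]).
    by case/existsP => u /andP[/eqP h1 /eqP h2] _; exists u; split.
  move=> /existsPn H; rewrite big1 // => u _; by rewrite (negbTE (H u)).
have lowB : forall g, List.In g gs -> forall (t : Tok) l,
    (val t).2.+1 * q <= l * m (val t).1 -> g t < l.
  move=> g Hg t l h.
  have [u [u1 u2 u3]] := exu _ _ _ (posA g Hg t).
  have m0 : 0 < m (val t).1 by have := valP t; lia.
  rewrite -u3 ltn_divLR //.
  have : u < (val t).2.+1 * q by rewrite -ltn_divLR // u2.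
  lia.
have upB : forall g, List.In g gs -> forall (t : Tok) l,
    g t < l -> (val t).2 * q < l * m (val t).1.
  move=> g Hg t l h.
  have [u [u1 u2 u3]] := exu _ _ _ (posA g Hg t).
  have m0 : 0 < m (val t).1 by have := valP t; lia.
  move: h; rewrite -u3 ltn_divLR // => h.
  have := leq_trunc_div u q; rewrite u2; lia.
have tokcat : forall j (P : nat -> bool),
    \sum_(t : Tok) (((val t).1 == j) && P (val t).2 : nat) = \sum_(k < q | k < m j) P k.
  move=> j P.
  rewrite (tok_sum (fun j' k => ((j' == j) && P k) : nat)) (bigD1 j) //= [X in _ + X]big1 ?addn0.
    by apply: eq_bigr => k _; rewrite eqxx.
  by move=> j' nj; apply: big1 => k _; rewrite (negbTE nj).
have sumlt : forall a, \sum_(k < q) (k < a) = minn a q.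
  by move=> a; have := sum_range q (leq0n a); rewrite min0n subn0.
have quota : forall g, List.In g gs -> forall j l, l <= q ->
    cnt (rg g) j l * q < l * m j + q /\ l * m j < cnt (rg g) j l * q + q.
  move=> g Hg j l lq; rewrite cntE; last exact: hinj.
  set c := \sum_t _.
  have lo : l * m j %/ q <= c.
    have e : \sum_(t : Tok) (((val t).1 == j) && ((val t).2.+1 * q <= l * m j) : nat) = l * m j %/ q.
      rewrite (tokcat j (fun k => k.+1 * q <= l * m j)).
      have hle : l * m j %/ q <= m j.
        apply: (@leq_trans (q * m j %/ q)); last by rewrite mulKn.
        by apply: leq_div2r; rewrite leq_mul2r lq orbT.
      rewrite big_mkcond /= -[RHS](minn_idPl (leq_trans hle (mle j))) -sumlt.
      apply: eq_bigr => k _; rewrite -leq_divRL //.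
      by case: ifP => // /negbT; rewrite -leqNgt => h; rewrite ltnNge (leq_trans hle h).
    rewrite -e; apply: leq_sum => t _.
    case: eqP => //= E; case h: ((val t).2.+1 * q <= l * m j) => //=.
    by rewrite -E in h; rewrite (lowB g Hg t l h).
  have hi : c <= (l * m j + q.-1) %/ q.
    apply: (@leq_trans (\sum_(t : Tok) ((((val t).1 == j) && ((val t).2 * q < l * m j)) : nat))).
      apply: leq_sum => t _; case: eqP => //= E; case h: (g t < l) => //=.
      by rewrite -E (upB g Hg t l h).
    rewrite (tokcat j (fun k => k * q < l * m j)).
    apply: (@leq_trans (\sum_(k < q) (k < (l * m j + q.-1) %/ q))); last by rewrite sumlt geq_minl.
    rewrite big_mkcond /=; apply: leq_sum => k _; case: ifP => // _.
    case h: (k * q < l * m j) => //=.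
    by rewrite leq_divRL //; move: h; rewrite mulSn; lia.
  have h1 : (l * m j %/ q) * q <= c * q by rewrite leq_mul2r lo orbT.
  have h2 : c * q <= ((l * m j + q.-1) %/ q) * q by rewrite leq_mul2r hi orbT.
  have h3 := leq_trunc_div (l * m j + q.-1) q.
  have h4 := ltn_ceil (l * m j) q0.
  lia.
have expE : forall j l, l <= q -> \sum_(g <- gs) cnt (rg g) j l = l * m j.
  move=> j l lq.
  rewrite (big_In (G := fun g => \sum_t \sum_(p < q | p < l)
       (((val t).1 == j) * (g t == p)))); last first.
    move=> g Hg; rewrite cntE; last exact: hinj.
    apply: eq_bigr => t _; rewrite -big_distrr /= -ltE ?ltn_ord //.
    by rewrite mulnb.
  rewrite exchange_big /=.
  rewrite (eq_bigr (fun t => \sum_(p < q | p < l) ((val t).1 == j) * A t p)); last first.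
    move=> t _; rewrite exchange_big /=; apply: eq_bigr => p _.
    by rewrite -big_distrr /= hsum.
  rewrite exchange_big /=.
  rewrite (eq_bigr (fun p => m j)); last first.
    move=> p _; rewrite /A.
    rewrite (tok_sum (fun j' k => (j' == j) * B j' k p)) (bigD1 j) //= [X in _ + X]big1 ?addn0.
      rewrite eqxx; under eq_bigr do rewrite mul1n; exact: colB.
    by move=> j' nj; apply: big1 => k _; rewrite (negbTE nj).
  rewrite big_mkcond /= (eq_bigr (fun i : 'I_q => (i < l) * m j)); last first.
    by move=> i _; case: ifP; rewrite ?mul1n ?mul0n.
  by rewrite -big_distrl /= sumlt (minn_idPl lq).
exists (map rg gs); split.
- by rewrite size_map.
- move=> r /List.in_map_iff [g [<- Hg]] j l lq; exact: quota.
- by move=> j l lq; rewrite big_map expE.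
Qed.

Lemma periodic_sum (q : nat) (F : nat -> nat) : (forall i, F (i + q) = F i) ->
  forall a b, \sum_(i < a * q + b) F i = a * \sum_(i < q) F i + \sum_(i < b) F i.
Proof.
move=> Fp; elim=> [|a IH] b; first by rewrite mul0n add0n.
rewrite mulSn -addnA big_split_ord /=.
rewrite (eq_bigr (fun i : 'I_(a * q + b) => F i)); last by move=> i _; rewrite addnC Fp.
by rewrite IH mulSn addnA.
Qed.

Definition cu (C : finType) (sigma : nat -> C) (j : C) (l : nat) : nat :=
  (\sum_(1 <= k < l.+1) (sigma k == j))%N.

Lemma count_per (C : finType) (q : nat) (q0 : 0 < q) (r : 'I_q -> C) (j : C) (l : nat) :
  cu (fun k => r (Ordinal (ltn_pmod k.-1 q0))) j l = (l %/ q) * cnt r j q + cnt r j (l %% q).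
Proof.
rewrite /cu big_add1 /= big_mkord.
pose G i := (r (Ordinal (ltn_pmod i q0)) == j : nat).
have posE : forall i : 'I_q, Ordinal (ltn_pmod i q0) = i.
  by move=> i; apply: val_inj; rewrite /= modn_small.
have Gp : forall i, G (i + q) = G i.
  move=> i; rewrite /G; congr (r _ == j : nat); apply: val_inj; by rewrite /= modnDr.
have E := periodic_sum Gp (l %/ q) (l %% q); rewrite -divn_eq in E.
rewrite (eq_bigr (fun i : 'I_l => G i)) // E.
congr (_ * _ + _).
  by rewrite /cnt; apply: eq_big => [i|i _]; rewrite ?ltn_ord // /G posE.
rewrite (big_ord_widen q G (ltnW (ltn_pmod l q0))) /cnt.
by apply: eq_bigr => i _; rewrite /G posE.
Qed.

Lemma common_denom (C : finType) (alpha : C -> rat) :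
  (forall j, 0 < alpha j)%R -> (\sum_j alpha j = 1)%R ->
  exists (q : nat) (m : C -> nat),
    [/\ 0 < q, q = \sum_j m j & forall j, alpha j = ((m j)%:R / q%:R)%R].
Proof.
move=> apos asum.
pose d j := `|denq (alpha j)|%N.
pose n j := `|numq (alpha j)|%N.
have d0 : forall j, 0 < d j by move=> j; rewrite /d absz_gt0 denq_neq0.
pose q := \prod_j d j.
have q0 : 0 < q by rewrite prodn_gt0.
have dq : forall j, d j %| q by move=> j; rewrite /q (bigD1 j) //= dvdn_mulr.
pose m j := n j * (q %/ d j).
have am : forall j, alpha j = ((m j)%:R / q%:R)%R.
  move=> j.
  have qe : q = (q %/ d j) * d j by rewrite divnK.
  have k0 : (0 < q %/ d j)%N by rewrite divn_gt0 // dvdn_leq.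
  rewrite /m [in X in (_ / X)%R]qe !natrM [X in (_ / X)%R]mulrC.
  rewrite -mulf_div divff ?mulr1; last by rewrite pnatr_eq0 -lt0n.
  rewrite -[LHS]divq_num_den; congr (_ / _)%R.
    rewrite /n -[in LHS](@gez0_abs (numq (alpha j))) //.
    by apply: ltW; rewrite numq_gt0.
  by rewrite /d -[in LHS](@gez0_abs (denq (alpha j))) // ltW // denq_gt0.
exists q, m; split => //.
apply/eqP; rewrite -(eqr_nat rat) natr_sum.
have : (\sum_j alpha j * q%:R = q%:R)%R by rewrite -mulr_suml asum mul1r.
move=> <-; apply/eqP; apply: eq_bigr => j _.
by rewrite am mulfVK // pnatr_eq0 -lt0n.
Qed.

Unset Implicit Arguments.
From mathcomp Require Import all_classical all_reals all_analysis.
Import Order.TTheory GRing.Theory Num.Theory.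
Local Open Scope ring_scope.

Definition wq (R : realType) (n : nat) : {nonneg R} := ((n.+1%:R : R)^-1)%:nng.

Definition unifq (R : realType) (n : nat) : set nat -> \bar R :=
  msum (fun k => mscale (wq R n) (@dirac _ nat k R)) n.+1.

HB.instance Definition _ (R : realType) (n : nat) := Measure.on (unifq R n).

Lemma unifq_setT (R : realType) (n : nat) : unifq R n setT = 1%E.
Proof.
rewrite /unifq /msum /mscale /=.
under eq_bigr => i _ do rewrite /mscale /= /dirac indicE in_setT mule1.
rewrite sumEFin big_const_ord iter_addr addr0 /= -[X in (X *+ _)]mulr1 -mulr_natr.
by rewrite mulr1 mulVf // pnatr_eq0.
Qed.

HB.instance Definition _ (R : realType) (n : nat) :=
  @Measure_isProbability.Build _ _ R (unifq R n) (unifq_setT R n).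

Lemma int_unifq (R : realType) (n : nat) (f : nat -> nat) :
  (\int[unifq R n]_w ((f w)%:R : R)%:E =
  (((\sum_(k < n.+1) f k)%N)%:R / n.+1%:R : R)%:E)%E.
Proof.
rewrite /unifq ge0_integral_measure_sum //=.
under eq_bigr => i _ do rewrite ge0_integral_mscale //= integral_dirac //= diracT mul1e.
rewrite -ge0_sume_distrr //= sumEFin natr_sum -EFinM mulrC.
by [].
Qed.
Lemma ae_all (R : realType) (n : nat) (Q : nat -> Prop) :
  (forall w, Q w) -> {ae unifq R n, forall w, Q w}.
Proof. by move=> H; apply: aeW. Qed.

Lemma In_nth (T : Type) (s : seq T) x0 i : (i < size s)%N -> List.In (nth x0 s i) s.
Proof.
elim: s i => [|x s IH] [|i] //= h; first by left.
by right; apply: IH.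
Qed.

Theorem mainTheorem6 (R : realType) (C : finType) (alpha : C -> rat) :
  (1 < #|C|)%N ->
  (forall j, 0 < alpha j < 1) ->
  \sum_(j : C) alpha j = 1 ->
  exists (d : measure_display) (T : measurableType d) (P : probability T R)
         (sigma : T -> nat -> C),
    unbiased_within_quota_random_roster P alpha sigma.
Proof.
move=> hC ha hs.
have apos : forall j, 0 < alpha j by move=> j; case/andP: (ha j).
have [q [m [q0 hq am]]] := common_denom apos hs.
case/card_gt0P: (ltnW hC) => c0 _.
have [rs [hsz hquota hexp]] := core c0 hq q0.
pose r0 : 'I_q -> C := fun _ => c0.
pose sigma (w : nat) (k : nat) : C := (nth r0 rs (w %% q)) (Ordinal (ltn_pmod k.-1 q0)).
have cntq : forall r, List.In r rs -> forall j, cnt r j q = m j.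
  move=> r Hr j; have [h1 h2] := hquota r Hr j q (leqnn q).
  apply/eqP; rewrite eqn_leq; apply/andP; split;
    rewrite -ltnS -(ltn_pmul2r q0) mulSn; lia.
have cntE : forall w j l, count_upto (sigma w) j l =
    (l %/ q * m j + cnt (nth r0 rs (w %% q)) j (l %% q))%N.
  move=> w j l; rewrite -(cntq (nth r0 rs (w %% q))); last by apply: In_nth; rewrite hsz ltn_pmod.
  exact: (count_per q0 (nth r0 rs (w %% q)) j l).
have xE : forall j (l : nat), l%:R * alpha j = (l * m j)%:R / q%:R.
  by move=> j l; rewrite am natrM mulrA.
exists _, nat, (unifq R q.-1), sigma; split.
- by move=> k j.
- apply: aeW => w l j l1.
  set r := nth r0 rs (w %% q).
  have Hr : List.In r rs by apply: In_nth; rewrite hsz ltn_pmod.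
  have [b1 b2] := hquota r Hr j (l %% q)%N (ltnW (ltn_pmod l q0)).
  set N := count_upto (sigma w) j l.
  have NE : N = (l %/ q * m j + cnt r j (l %% q))%N by rewrite /N cntE.
  have E1 : (N * q = l %/ q * m j * q + cnt r j (l %% q) * q)%N by rewrite NE mulnDl.
  have E2 : (l * m j = l %/ q * m j * q + l %% q * m j)%N.
    by rewrite {1}(divn_eq l q) mulnDl mulnAC.
  have L1 : (N * q < l * m j + q)%N by lia.
  have L2 : (l * m j < N * q + q)%N by lia.
  have q0' : (0 : rat) < q%:R by rewrite ltr0n.
  split.
  + have h : Num.floor (l%:R * alpha j) < N%:Z + 1.
      have e : ((N%:Z + 1)%:~R : rat) = N.+1%:R by rewrite intrD -natr1.
      rewrite floor_lt_int xE ltr_pdivrMr // e -natrM ltr_nat mulSn.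
      lia.
    lia.
  + have h : N%:Z - 1 < Num.ceil (l%:R * alpha j).
      have e : ((N%:Z - 1)%:~R : rat) = N%:R - 1 by rewrite intrB.
      rewrite ceil_gt_int xE ltr_pdivlMr // e mulrBl mul1r ltrBlDr.
      by rewrite -natrM -natrD ltr_nat.
    lia.
- move=> l j l1.
  rewrite int_unifq; congr (_%:E).
  have Hs : forall n, n = q ->
      (\sum_(k < n) count_upto (sigma k) j l = l * m j)%N.
    move=> n ->.
    rewrite (eq_bigr (fun k : 'I_q => (l %/ q * m j + cnt (nth r0 rs k) j (l %% q))%N)); last first.
      by move=> k _; rewrite cntE modn_small.
    rewrite big_split /= sum_nat_const card_ord.
    have -> : (\sum_(k < q) cnt (nth r0 rs k) j (l %% q))%N = (\sum_(r <- rs) cnt r j (l %% q))%N.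
      by rewrite (big_nth r0) hsz big_mkord.
    rewrite hexp; last exact: ltnW (ltn_pmod l q0).
    rewrite {3}(divn_eq l q) mulnDl; lia.
  rewrite Hs ?prednK // am fmorph_div /= !ratr_nat natrM.
  by rewrite mulrA.
Qed.
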